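(* Let $G$ be a finite simple graph on vertex set $\{x_1,\dots,x_n\}$, let $\Bbbk$ be a field and $S=\Bbbk[x_1,\dots,x_n]$. Let $x$ be a leaf of $G$ with neighbor $y$. Then for all $k\geq 2$, \[I(G)^{[k]}:(xy)=I(G-\{x,y\})^{[k-1]},\] both considered as ideals of $S$.
   Context: A leaf is a vertex of degree $1$. $G-U$ is the induced subgraph on $V(G)\setminus U$. For a graph $H$ with vertices among $x_1,\dots,x_n$ and $k\ge1$, $I(H)^{[k]}$ is the ideal generated by the products $e_1\cdots e_k$ over all matchings $\{e_1,\dots,e_k\}$ of $H$ of size $k$ (edge $\{x_i,x_j\}$ identified with the monomial $x_ix_j$); it is $(0)$ if $k$ exceeds the matching number of $H$. $I:(m)=\{f\in S: fm\in I\}$. *)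

(* Defs.v *)
From HB Require Import structures.
From mathcomp Require Import all_boot all_order all_algebra.
From mathcomp Require Export mpoly.
Set Implicit Arguments. Unset Strict Implicit. Unset Printing Implicit Defensive.
Import GRing.Theory.
Local Open Scope ring_scope.

(* A simple graph on vertices x_1..x_n (indexed by 'I_n) is a symmetric,
   irreflexive relation e : rel 'I_n. *)

Definition is_edge n (e : rel 'I_n) (A : {set 'I_n}) : bool :=
  [exists u, exists v, e u v && (A == [set u; v])].

Definition is_matching n (e : rel 'I_n) (k : nat) (M : {set {set 'I_n}}) : bool :=
  [&& [forall A in M, is_edge e A],
      [forall A in M, forall B in M, (A != B) ==> [disjoint A & B]]
    & #|M| == k].

Definition matching_mono (K : fieldType) n (M : {set {set 'I_n}}) : {mpoly K[n]} :=
  \prod_(A in M) \prod_(i in A) 'X_i.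

(* Membership in the ideal I(H)^[k] of S = K[x_1..x_n]: f is an S-linear
   combination of the products e_1...e_k over matchings of size k. If there is
   no such matching, the ideal is (0). *)
Definition in_matching_power (K : fieldType) n (e : rel 'I_n) (k : nat)
    (f : {mpoly K[n]}) : Prop :=
  exists c : {set {set 'I_n}} -> {mpoly K[n]},
    f = \sum_(M | is_matching e k M) c M * matching_mono K M.

Definition remove_vertices n (e : rel 'I_n) (U : {set 'I_n}) : rel 'I_n :=
  fun u v => [&& e u v, u \notin U & v \notin U].

(* Main.v *)
Require Import Defs.
From HB Require Import structures.
From mathcomp Require Import all_boot all_order all_algebra.
From mathcomp Require Import mpoly.
Set Implicit Arguments. Unset Strict Implicit. Unset Printing Implicit Defensive.
Import GRing.Theory.
Local Open Scope ring_scope.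

Section Gen.
Variables (K : fieldType) (n : nat).

Definition chi (S : {set 'I_n}) : 'X_{1..n} := [multinom ((i \in S) : nat) | i < n].
Definition msub (m : 'X_{1..n}) (S : {set 'I_n}) : 'X_{1..n} :=
  [multinom (m i - (i \in S))%N | i < n].
Definition covered (S : {set 'I_n}) (m : 'X_{1..n}) := [forall i in S, (0 < m i)%N].

Lemma chiE S i : chi S i = (i \in S). Proof. by rewrite mnmE. Qed.

Lemma msubK m S : covered S m -> (chi S + msub m S)%MM = m.
Proof.
move=> /forall_inP H; apply/mnmP => i; rewrite mnmDE chiE mnmE.
case: (boolP (i \in S)) => [iS|_] /=; last by rewrite subn0.
by rewrite add1n subn1 prednK // H.
Qed.

Lemma Xchi S : 'X_[chi S] = \prod_(i in S) ('X_i : {mpoly K[n]}).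
Proof.
rewrite mpolyXE_id [RHS]big_mkcond /=; apply: eq_bigr => i _.
by rewrite chiE; case: (i \in S); rewrite ?expr1 ?expr0.
Qed.

Lemma mono_chi e k M : is_matching e k M ->
  matching_mono K M = 'X_[chi (cover M)].
Proof.
case/and3P => _ /forall_inP D _; rewrite Xchi /matching_mono big_trivIset //.
apply/trivIsetP => A B AM BM AB.
by move: (D A AM) => /forall_inP /(_ B BM) /implyP; apply.
Qed.

Lemma msuppMX_ex (p : {mpoly K[n]}) t m : m \in msupp (p * 'X_[t]) ->
  exists2 m', m = (t + m')%MM & m' \in msupp p.
Proof.
by rewrite (perm_mem (msuppMX p t)) => /mapP [m' H ->]; exists m'.
Qed.

Lemma impA e k (g : {mpoly K[n]}) m : @in_matching_power K n e k g -> m \in msupp g ->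
  exists M, is_matching e k M /\ covered (cover M) m.
Proof.
case=> c -> /msupp_sum_le /flattenP [s /mapP [M]].
rewrite mem_filter => /andP [HM _] -> .
rewrite (mono_chi HM) => /msuppMX_ex [m' -> _].
exists M; split => //; apply/forall_inP => i iM.
by rewrite mnmDE chiE iM.
Qed.

Lemma impB e k (f : {mpoly K[n]}) :
  (forall m, m \in msupp f -> exists M, is_matching e k M /\ covered (cover M) m) ->
  in_matching_power e k f.
Proof.
move=> H.
pose pk m := [pick M | is_matching e k M && covered (cover M) m].
exists (fun M => \sum_(m <- msupp f | pk m == Some M) f@_m *: 'X_[msub m (cover M)]).
rewrite [LHS]mpolyE.
rewrite [RHS](eq_bigr _ (fun M _ => big_distrl _ _ _)) /=.
rewrite (exchange_big_dep xpredT) //=.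
apply: eq_big_seq => m mf.
have [M0 HM0 pkE] : exists2 M0, is_matching e k M0 && covered (cover M0) m & pk m = Some M0.
  rewrite /pk; case: pickP => [M0 HM0|H0]; first by exists M0.
  by have [M [HM CM]] := H m mf; move: (H0 M); rewrite HM CM.
rewrite (big_pred1 M0); last first.
  move=> M /=; rewrite pkE; case: (boolP (M == M0)) => [/eqP ->|MM0].
    by rewrite eqxx; case/andP: HM0 => ->.
  by apply/negbTE; rewrite negb_and; apply/orP; right; apply: contra MM0 => /eqP [->].
case/andP: HM0 => HM CM.
have -> : matching_mono K M0 = 'X_[chi (cover M0)] := mono_chi HM.
by rewrite -scalerAl -mpolyXD addmC msubK.
Qed.

End Gen.
Lemma disjP (T : finType) (A B : {set T}) :
  (forall i, i \in A -> i \in B -> False) -> [disjoint A & B].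
Proof.
move=> H; rewrite disjoints_subset; apply/subsetP => i iA; rewrite inE.
by apply/negP => iB; apply: (H i).
Qed.

Section Comb.
Variables (n : nat) (e : rel 'I_n) (x y : 'I_n).
Hypothesis esym : forall u v, e u v = e v u.
Hypothesis hxy : e x y.
Hypothesis hleaf : forall z, e x z -> z = y.
Local Notation S := [set x; y].
Local Notation e' := (remove_vertices e [set x; y]).

Lemma edge_avoid A i : is_edge e' A -> i \in A -> i \notin S.
Proof.
case/existsP => u /existsP [v /andP [/and3P [_ uS vS] /eqP ->]].
by rewrite !inE in uS vS *; case/orP => /eqP ->.
Qed.

Lemma edge_e' A : is_edge e' A -> is_edge e A.
Proof.
case/existsP => u /existsP [v /andP [/and3P [euv _ _] HA]].
by apply/existsP; exists u; apply/existsP; exists v; rewrite euv.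
Qed.

Lemma edge_xy B : is_edge e B -> x \in B -> y \in B.
Proof.
case/existsP => u /existsP [v /andP [euv /eqP ->]].
rewrite !inE => /orP [] /eqP xE; subst.
  by rewrite (hleaf euv) eqxx orbT.
by rewrite esym in euv; rewrite (hleaf euv) eqxx.
Qed.

Lemma C2 k M : (0 < k)%N -> is_matching e' k.-1 M -> is_matching e k (S |: M).
Proof.
move=> k0 /and3P [/forall_inP E /forall_inP D /eqP C].
have SM : S \notin M.
  apply/negP => /E HS; have := edge_avoid (i:=x) HS.
  by rewrite !inE eqxx /= => /(_ isT).
apply/and3P; split.
- apply/forall_inP => A /setU1P [->|/E /edge_e' //].
  by apply/existsP; exists x; apply/existsP; exists y; rewrite hxy eqxx.
- apply/forall_inP => A HA; apply/forall_inP => B HB; apply/implyP => AB.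
  have disS : forall C0, C0 \in M -> [disjoint S & C0].
    move=> C0 /E HC; apply: disjP => i iS iC.
    by move: (edge_avoid HC iC); rewrite iS.
  move: HA HB AB => /setU1P [->|HA] /setU1P [->|HB]; rewrite ?eqxx //.
  + by move=> _; apply: disS.
  + by move=> _; rewrite disjoint_sym; apply: disS.
  + by move=> AB; move: (D A HA) => /forall_inP /(_ B HB) /implyP; apply.
- by rewrite cardsU1 SM C add1n prednK.
Qed.

Lemma C1 k M : (0 < k)%N -> is_matching e k M ->
  exists M', [/\ is_matching e' k.-1 M', M' \subset M &
     forall B i, B \in M' -> i \in B -> i \notin S].
Proof.
move=> k0 /and3P [/forall_inP E /forall_inP D /eqP C].
have [A AM HA] : exists2 A, A \in M & forall B, B \in M -> B != A -> (x \notin B) && (y \notin B).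
  case: (boolP [exists A in M, y \in A]) => [/exists_inP [A AM yA]|/exists_inP nY].
    exists A => // B BM BA.
    have yB : y \notin B.
      apply/negP => yB; move: (D A AM) => /forall_inP /(_ B BM).
      by rewrite eq_sym BA /= => /disjointFr /(_ yA); rewrite yB.
    by rewrite yB andbT; apply: contra yB; apply: edge_xy; apply: E.
  have : M != set0 by rewrite -card_gt0 C.
  case/set0Pn => A AM; exists A => // B BM _.
  have yB : y \notin B by apply/negP => yB; apply: nY; exists B.
  by rewrite yB andbT; apply: contra yB; apply: edge_xy; apply: E.
have avoid : forall B i, B \in M :\ A -> i \in B -> i \notin S.
  move=> B i /setD1P [BA BM] iB; case/andP: (HA B BM BA) => xB yB.
  rewrite !inE; apply/negP => /orP [] /eqP iE; subst.
    by rewrite iB in xB.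
  by rewrite iB in yB.
exists (M :\ A); split => //; last exact: subD1set.
apply/and3P; split.
- apply/forall_inP => B HB; have := HB; case/setD1P => _ /E.
  case/existsP => u /existsP [v /andP [euv /eqP BE]].
  apply/existsP; exists u; apply/existsP; exists v; rewrite BE eqxx andbT.
  have uB : u \in B by rewrite BE !inE eqxx.
  have vB : v \in B by rewrite BE !inE eqxx orbT.
  by rewrite /remove_vertices euv (avoid _ _ HB uB) (avoid _ _ HB vB).
- apply/forall_inP => B /setD1P [_ HB]; apply/forall_inP => B' /setD1P [_ HB'].
  by move: (D B HB) => /forall_inP /(_ B' HB').
- by rewrite (cardsD1 A M) AM in C; rewrite -C.
Qed.

End Comb.

Theorem lemma4p4 (K : fieldType) (n : nat) (e : rel 'I_n)
    (esym : forall u v, e u v = e v u) (eirr : forall u, e u u = false)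
    (x y : 'I_n) (hxy : e x y) (hleaf : forall z, e x z -> z = y)
    (k : nat) (hk : (2 <= k)%N) :
  forall f : {mpoly K[n]},
    @in_matching_power K n e k (f * ('X_x * 'X_y)) <->
    @in_matching_power K n (remove_vertices e [set x; y]) k.-1 f.
Proof.
have xy : x != y by apply: contraTneq hxy => ->; rewrite eirr.
have XE : 'X_x * 'X_y = 'X_[chi [set x; y]] :> {mpoly K[n]}.
  by rewrite Xchi big_setU1 ?inE // big_set1.
have k0 : (0 < k)%N by apply: ltnW.
move=> f; rewrite XE; split => H; apply: impB.
- move=> m mf.
  have : (chi [set x; y] + m)%MM \in msupp (f * 'X_[chi [set x; y]]).
    by rewrite mcoeff_msupp mcoeffMX -mcoeff_msupp.
  case/(impA H) => M [HM CM].
  have [M' [HM' sub av]] := C1 esym hxy hleaf k0 HM.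
  exists M'; split => //; apply/forall_inP => i /bigcupP [B BM' iB].
  have iM : i \in cover M by apply/bigcupP; exists B => //; apply: (subsetP sub).
  by have := forall_inP CM i iM; rewrite mnmDE chiE (negbTE (av B i BM' iB)).
- move=> m' /msuppMX_ex [m -> mf].
  case: (impA H mf) => M' [HM' CM'].
  exists ([set x; y] |: M'); split; first exact: C2.
  apply/forall_inP => i /bigcupP [B /setU1P [-> iS| BM iB]]; rewrite mnmDE chiE.
    by rewrite iS.
  have iM : i \in cover M' by apply/bigcupP; exists B.
  by rewrite addnC; apply: ltn_addr; apply: (forall_inP CM').
Qed.
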